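(* Let $T$ be a quasi-binary tree with $|V(T)|>1$ and vertex weight function $\omega:V(T)\to\mathbb{R}$. Let $\gamma,\eta\in\mathbb{R}$ be such that $\gamma\ge\omega_3$ and $$\max\left\{\frac{\omega_1-\gamma}{2},\ \omega_2-\gamma\right\}\le \eta\le \frac{\omega(T)}{2}.$$ Then there exists an edge $e\in E(T)$ such that, denoting by $C_e^1, C_e^2$ the two connected components of $T\setminus\{e\}$, we have $$\eta\le \omega(C_e^i)\le 2\eta+\gamma$$ for some $i\in\{1,2\}$.
   Context: A binary tree is a tree in which every vertex has degree $3$, except for pending vertices (degree $1$) and one root vertex (degree $2$). A tree is quasi-binary if it is a connected subgraph of a binary tree; in particular every vertex has degree $1$, $2$ or $3$. For a subgraph $H$ write $\omega(H)=\sum_{v\in V(H)}\omega(v)$. For $i=1,2,3$ let $V_i$ be the set of vertices of degree $i$, and let $\omega_i=\max\{\omega(v): v\in V_j \text{ for some } j \text{ with } i\le j\le 3\}$ (the maximum weight of a vertex of degree at least $i$). *)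

(* Defs.v *)
From mathcomp Require Import all_boot all_order all_algebra.
Set Implicit Arguments. Unset Strict Implicit. Unset Printing Implicit Defensive.
Import Order.TTheory GRing.Theory Num.Theory.
Local Open Scope ring_scope.

Definition simple_graph (V : finType) (e : rel V) : Prop :=
  symmetric e /\ irreflexive e.

Definition deg (V : finType) (e : rel V) (v : V) : nat := #|[pred u | e v u]|.

Definition connected_graph (V : finType) (e : rel V) : Prop :=
  forall x y : V, connect e x y.

Definition acyclic (V : finType) (e : rel V) : Prop :=
  forall c : seq V, uniq c -> cycle e c -> (size c < 3)%N.

Definition is_tree (V : finType) (e : rel V) : Prop :=
  [/\ simple_graph e, connected_graph e & acyclic e].

Definition binary_tree (B : finType) (eB : rel B) : Prop :=
  is_tree eB /\
  exists r : B, deg eB r = 2%N /\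
    forall v : B, v != r -> deg eB v = 1%N \/ deg eB v = 3%N.

Definition quasi_binary (V : finType) (e : rel V) : Prop :=
  is_tree e /\
  exists (B : finType) (eB : rel B) (f : V -> B),
    [/\ binary_tree eB, injective f & forall x y, e x y -> eB (f x) (f y)].

Definition wset (V : finType) (R : numDomainType) (w : V -> R) (A : {set V}) : R :=
  \sum_(v in A) w v.

(* "omega_i <= x": every vertex of degree at least i has weight <= x,
   i.e. the maximum weight over vertices of degree >= i is at most x
   (vacuous when there is no such vertex: max of the empty set = -oo). *)
Definition omega_le (V : finType) (e : rel V) (R : numDomainType)
  (w : V -> R) (i : nat) (x : R) : Prop :=
  forall v : V, (i <= deg e v)%N -> w v <= x.

Definition remove_edge (V : finType) (e : rel V) (u v : V) : rel V :=
  fun x y => e x y && ~~ (((x == u) && (y == v)) || ((x == v) && (y == u))).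

Definition comp_after_removal (V : finType) (e : rel V) (u v x : V) : {set V} :=
  [set y | connect (remove_edge e u v) x y].

(* Main.v *)
Require Import Defs.
From mathcomp Require Import all_boot all_order all_algebra.
From mathcomp Require Import lra.
Import Order.TTheory GRing.Theory Num.Theory.
Local Open Scope ring_scope.
Set Implicit Arguments. Unset Strict Implicit.

Section Tree.
Variables (V : finType) (e : rel V).
Hypothesis esym : symmetric e.
Hypothesis eirr : irreflexive e.
Hypothesis econ : connected_graph e.
Hypothesis eacy : acyclic e.

Local Notation E u v := (remove_edge e u v).
Local Notation S u v := (comp_after_removal e u v u).
Definition Dl (v : V) : rel V := fun a b => [&& e a b, a != v & b != v].

Lemma E_sub u v x y : E u v x y -> e x y.
Proof. by case/andP. Qed.

Lemma E_sym u v : symmetric (E u v).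
Proof.
move=> x y; rewrite /remove_edge esym.
by case: (x == u); case: (y == v); case: (x == v); case: (y == u).
Qed.

Lemma E_swap u v x y : E v u x y = E u v x y.
Proof. by rewrite /remove_edge orbC. Qed.

Lemma Dl_sym v : symmetric (Dl v).
Proof. by move=> x y; rewrite /Dl esym; case: (x != v); case: (y != v); rewrite ?andbF. Qed.

Lemma L1 u v : e u v -> ~~ connect (E u v) u v.
Proof.
move=> euv; apply/negP => /connectP [p0 pp0 lp0].
case/shortenP: pp0 lp0 => p pp up _ lp.
have cyc : cycle e (u :: p).
  by rewrite /= rcons_path (sub_path (@E_sub u v) pp) -lp esym.
have := eacy up cyc.
case: p pp up lp cyc => [|x [|z q]] //=.
- by move=> _ _ vu; move: euv; rewrite -vu eirr.
- by move=> /andP [H _] _ vx; move: H; rewrite -vx /remove_edge !eqxx /= andbF.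
Qed.

Lemma cut u v y : e u v -> connect (E u v) u y || connect (E u v) v y.
Proof.
move=> euv; have /connectP [p pp ->] := econ u y.
have : connect (E u v) u u || connect (E u v) v u by rewrite connect0.
move: pp; have key : forall a p, path e a p -> connect (E u v) u a || connect (E u v) v a ->
  connect (E u v) u (last a p) || connect (E u v) v (last a p); last by apply: key.
move=> a0 p0; elim: p0 a0 => [|b p' IH] a //= /andP [eab pp] H; apply: IH pp _.
have [Eab|nEab] := boolP (E u v a b).
  by case/orP: H => H; apply/orP; [left|right]; apply: connect_trans H (connect1 Eab).
move: nEab; rewrite /remove_edge eab /= negbK.
by case/orP => /andP [_ /eqP ->]; rewrite connect0 ?orbT.
Qed.

Lemma disj u v y : e u v -> connect (E u v) u y -> connect (E u v) v y -> False.
Proof.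
move=> euv cu cv; have := L1 euv; rewrite (connect_trans cu) //.
by rewrite (sym_connect_sym (@E_sym u v)).
Qed.

Lemma Dl_path_notin v x p : path (Dl v) x p -> v \notin p.
Proof.
elim: p x => [|b p IH] x //= /andP [/and3P [_ _ bv] pp].
by rewrite inE negb_or eq_sym bv (IH b).
Qed.

Lemma Dl_connect_ne v x y : x != v -> connect (Dl v) x y -> y != v.
Proof.
move=> xv /connectP [p pp ->]; have := mem_last x p.
rewrite inE => /orP [/eqP -> //|]; apply: contraTneq => ->.
exact: Dl_path_notin pp.
Qed.

Lemma path_E_Dl (r : rel V) v x p : subrel r e -> path r x p -> v \notin x :: p -> path (Dl v) x p.
Proof.
move=> sub; elim: p x => [|b p IH] x //= /andP [rxb pp].
rewrite !inE !negb_or => /and3P [xv bv np].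
rewrite /Dl sub // eq_sym xv eq_sym bv /= IH // inE negb_or bv //.
Qed.

Lemma path_Dl_E u v x p : path (Dl v) x p -> path (E u v) x p.
Proof.
apply: sub_path => a b /and3P [eab av bv].
by rewrite /remove_edge eab (negbTE av) (negbTE bv) /= !andbF.
Qed.

Lemma path_Dl_E' u v x p : path (Dl v) x p -> path (E v u) x p.
Proof. by move/(path_Dl_E u); rewrite (eq_path (@E_swap u v)). Qed.

Lemma K x v : e x v -> S x v = [set y | connect (Dl v) x y].
Proof.
move=> exv; apply/setP => y; rewrite !inE; apply/idP/idP.
  move=> /connectP [p pp ->]; apply/connectP; exists p => //.
  have nv : v \notin x :: p.
    by apply/negP => vin; have := L1 exv; rewrite (path_connect pp vin).
  exact: path_E_Dl (@E_sub x v) pp nv.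
move=> /connectP [p pp ->]; apply/connectP; exists p => //.
exact: path_Dl_E.
Qed.


Definition N a b := [set x | e a x] :\ b.

Lemma a_in_S a b : a \in S a b.
Proof. by rewrite inE connect0. Qed.

Lemma neq_e a b : e a b -> a != b.
Proof. by move=> eab; apply: contraTneq eab => ->; rewrite eirr. Qed.

Lemma sub_S a b x : e a b -> x \in N a b -> S x a \subset S a b.
Proof.
move=> eab; rewrite !inE => /andP [xb eax]; have exa : e x a by rewrite esym.
rewrite (K exa); apply/subsetP => y; rewrite !inE => /connectP [p pp ->].
have Eax : E a b a x.
  by rewrite /remove_edge eax eqxx (negbTE xb) (negbTE (neq_e eab)).
apply: (connect_trans (connect1 Eax)).
by apply/connectP; exists p => //; exact: path_Dl_E' pp.
Qed.

Lemma notin_S a x : e x a -> a \notin S x a.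
Proof.
move=> exa; rewrite (K exa) inE; apply/negP => c.
by have := Dl_connect_ne (neq_e exa) c; rewrite eqxx.
Qed.

Lemma cover_S a b y : e a b -> y \in S a b -> y != a -> exists2 x, x \in N a b & y \in S x a.
Proof.
move=> eab; rewrite inE => /connectP [p0 pp0 ->]; case/shortenP: pp0 => p pp up _.
case: p pp up => [|x q] /=; first by rewrite eqxx.
move=> /andP [Eax pq] /andP [aq uq] _.
have exa : e x a by rewrite esym (E_sub Eax).
exists x.
  rewrite !inE (E_sub Eax) andbT; move: Eax; rewrite /remove_edge eqxx /= => /andP [_].
  by apply: contra => /eqP ->; rewrite eqxx.
rewrite (K exa) inE; apply/connectP; exists q => //.
exact: path_E_Dl (@E_sub a b) pq aq.
Qed.

Lemma disj_S a x1 x2 : e a x1 -> e a x2 -> x1 != x2 -> [disjoint S x1 a & S x2 a].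
Proof.
move=> e1 e2 n12; have e1' : e x1 a by rewrite esym.
have e2' : e x2 a by rewrite esym.
rewrite (K e1') (K e2'); apply/pred0P => y /=; rewrite !inE; apply/negP => /andP [c1 c2].
have c : connect (Dl a) x1 x2 by rewrite (connect_trans c1) // (sym_connect_sym (@Dl_sym a)).
case/connectP: c => p0 pp0 l0; case/shortenP: pp0 l0 => p pp up _ l.
have x1a : x1 != a := neq_e e1'.
have ua : a \notin x1 :: p by rewrite inE negb_or eq_sym x1a (Dl_path_notin pp).
have cyc : cycle e (a :: x1 :: p).
  rewrite /= e1 rcons_path -l e2' andbT.
  by apply: sub_path pp => u v /and3P [].
have uu : uniq (a :: x1 :: p) by rewrite cons_uniq ua up.
have := eacy uu cyc.
by case: p {pp up ua cyc uu} l => [|z q] //= l; rewrite l eqxx in n12.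
Qed.

Lemma decomp (R : numDomainType) (w : V -> R) a b : e a b ->
  wset w (S a b) = w a + \sum_(x in N a b) wset w (S x a).
Proof.
move=> eab.
pose F x := if x \in N a b then S x a else set0.
have eqS : S a b = a |: \bigcup_x F x.
  apply/setP => y; apply/idP/idP.
    move=> yS; rewrite in_setU1; have [->|ya] := eqVneq y a; first by [].
    case: (cover_S eab yS ya) => x xN yx; apply/orP; right; apply/bigcupP; exists x => //.
    by rewrite /F xN.
  rewrite in_setU1 => /orP [/eqP -> | /bigcupP [x _]]; first exact: a_in_S.
  rewrite /F; case: ifP => xN; last by rewrite inE.
  exact: (subsetP (sub_S eab xN)).
have aF : a \notin \bigcup_x F x.
  apply/negP => /bigcupP [x _]; rewrite /F; case: ifP => xN; last by rewrite inE.
  have exa : e x a by move: xN; rewrite !inE esym => /andP [].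
  by apply/negP: (notin_S exa).
rewrite /wset eqS big_setU1 //= partition_disjoint_bigcup.
  congr (_ + _); rewrite [RHS]big_mkcond; apply: eq_bigr => x _; rewrite /F.
  by case: ifP => // _; rewrite big_set0.
move=> i j ij; rewrite /F; case: ifP => iN; case: ifP => jN;
  rewrite -?setI_eq0 ?setI0 ?set0I //.
move: iN jN; rewrite !inE => /andP [_ ei] /andP [_ ej].
by rewrite setI_eq0; apply: disj_S.
Qed.


Lemma part (R : numDomainType) (w : V -> R) u v : e u v ->
  wset w (S u v) + wset w (S v u) = wset w [set: V].
Proof.
move=> euv.
have -> : S v u = ~: S u v.
  apply/setP => y; rewrite !inE (eq_connect (@E_swap u v)).
  have := cut y euv; have := @disj u v y euv.
  by case: (connect (E u v) u y); case: (connect (E u v) v y) => //= /(_ isT isT).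
by rewrite /wset [RHS](big_setID (S u v)) setTI setTD.
Qed.

Lemma main_sec (R : realFieldType) (w : V -> R) (gamma eta : R) :
  (forall v, (deg e v <= 3)%N) ->
  (1 < #|V|)%N ->
  omega_le e w 3 gamma ->
  (forall v : V, (1 <= deg e v)%N -> (w v - gamma) / 2 <= eta) ->
  (forall v : V, (2 <= deg e v)%N -> w v - gamma <= eta) ->
  eta <= wset w [set: V] / 2 ->
  exists u v : V, e u v /\
    (eta <= wset w (comp_after_removal e u v u) <= 2 * eta + gamma).
Proof.
move=> dle3 hV h3 h1 h2 hT.
have [x0 [z0 ex0]] : exists x z, e x z.
  case/card_gt1P: hV => x [y [_ _ xy]].
  case/connectP: (econ x y) => [[|z p]] /=; first by move=> _ yx; rewrite yx eqxx in xy.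
  by move=> /andP [exz _] _; exists x, z.
pose P := fun p : V * V => e p.1 p.2 && (eta <= wset w (S p.1 p.2)).
have [p0 Pp0] : exists p0, P p0.
  have := part w ex0; case: (leP eta (wset w (S x0 z0))) => h.
    by move=> _; exists (x0, z0); rewrite /P /= ex0 h.
  move=> hp; exists (z0, x0); rewrite /P /= esym ex0 /=.
  move: hT; rewrite -hp => hT; lra.
case: (arg_minnP (fun p : V * V => #|S p.1 p.2|) Pp0) => [[a b]] /= /andP [eab hab] minab.
exists a, b; split => //; apply/andP; split => //.
have sx : forall x, x \in N a b -> wset w (S x a) <= eta.
  move=> x xN; case: (leP eta (wset w (S x a))) => h; last exact: ltW.
  have exa : e x a by move: xN; rewrite !inE esym => /andP [].
  have := minab (x, a); rewrite /P /= exa h /= => /(_ isT).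
  suff : (#|S x a| < #|S a b|)%N by rewrite ltnNge => /negbTE ->.
  apply: proper_card; apply/properP; split; first exact: sub_S.
  by exists a; [exact: a_in_S | exact: notin_S].
have hs : \sum_(x in N a b) wset w (S x a) <= eta *+ #|N a b|.
  by rewrite -sumr_const; apply: ler_sum.
have dN : (#|N a b|.+1 = deg e a)%N.
  rewrite /deg; have -> : #|[pred u | e a u]| = #|[set x | e a x]| by apply: eq_card => x; rewrite !inE.
  by rewrite (cardsD1 b [set x | e a x]) inE eab add1n.
rewrite decomp //.
have := dle3 a; rewrite -dN.
move: hs dN; case: #|N a b| => [|[|[|k]]] // hs dN _.
- have := h1 a; rewrite -dN => /(_ isT); move: hs; rewrite mulr0n => hs h; lra.
- have := h2 a; rewrite -dN => /(_ isT); move: hs; rewrite mulr1n => hs h; lra.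
- have := h3 a; rewrite -dN => /(_ isT); move: hs; rewrite mulr2n => hs h; lra.
Qed.

End Tree.

Unset Implicit Arguments.
Set Strict Implicit.

Theorem lemma1 (V : finType) (e : rel V) (R : realFieldType) (w : V -> R)
  (gamma eta : R) :
  quasi_binary e ->
  (1 < #|V|)%N ->
  omega_le e w 3 gamma ->
  (forall v : V, (1 <= deg e v)%N -> (w v - gamma) / 2 <= eta) ->
  (forall v : V, (2 <= deg e v)%N -> w v - gamma <= eta) ->
  eta <= wset w [set: V] / 2 ->
  exists u v : V, e u v /\
    (eta <= wset w (comp_after_removal e u v u) <= 2 * eta + gamma).
Proof.
move=> [[[esym eirr] econ eacy] [B [eB [f [[_ [r [degr degB]]] finj fhom]]]]].
apply: main_sec => // v.
apply: (@leq_trans (deg eB (f v))).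
  rewrite /deg -(card_imset _ finj); apply: subset_leq_card.
  by apply/subsetP => z /imsetP [u uin ->]; rewrite inE; apply: fhom.
have [->|nr] := eqVneq (f v) r; first by rewrite degr.
by case: (degB _ nr) => ->.
Qed.
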